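(* Let $\mathbb{C}$ be an isostable squares category. For every $n\ge0$, the forgetful functor $U_n:S^{\square}_n\mathbb{C}\to\mathcal{H}_n\mathbb{C}$, sending an object $(A_{jk})$ to its top row $O=A_{00}\rightarrowtail A_{01}\rightarrowtail\cdots\rightarrowtail A_{0n}$, is an equivalence of categories.
   Context: A squares category is a flat double category (squares uniquely determined by their boundary; we say a boundary ''is a square'') with a distinguished object $O$ initial in the horizontal category $\mathcal{H}_{\mathbb{C}}$ (morphisms $\rightarrowtail$) and terminal in the vertical category $\mathcal{V}_{\mathbb{C}}$ (morphisms $\twoheadrightarrow$). A vertical $f:A\twoheadrightarrow B$ is a vertical weak equivalence if the boundary (top $O\rightarrowtail A$, left $\mathrm{id}_O$, right $f$, bottom $O\rightarrowtail B$) is a square; a horizontal $g:A\rightarrowtail B$ is a horizontal weak equivalence if the boundary (top $g$, left $A\twoheadrightarrow O$, right $B\twoheadrightarrow O$, bottom $\mathrm{id}_O$) is a square. Vertical natural transformations between double functors of flat double categories: vertical components $\tau_A$ with $(Ff,\tau_A,\tau_{A'},Gf)$ a square for each horizontal $f$ and commuting naturality squares in the vertical category; $\mathrm{Fun}^v$ is the functor category. With $\boxdot$ the flat double category generated by one square (corners $a,b,c,d$, horizontal $a\rightarrowtail b,c\rightarrowtail d$, vertical $a\twoheadrightarrow c,b\twoheadrightarrow d$), $i:\mathrm{span}\hookrightarrow\boxdot$ on $a\rightarrowtail b,a\twoheadrightarrow c$ and $j:\mathrm{cospan}\hookrightarrow\boxdot$ on $b\twoheadrightarrow d,c\rightarrowtail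 d$: a squares category is stable if (i) $i^*$ on $\mathrm{Fun}^v(-,\mathbb{C})$ has a section functor $s$, (ii) there is a natural transformation $w:si^*\Rightarrow\mathrm{id}$ with components the identity at $a,b,c$, (iii) $j^*$ has a section functor $t$, (iv) there is a natural transformation $u:tj^*\Rightarrow\mathrm{id}$ with components the identity at $b,c,d$ and a vertical weak equivalence at $a$. It is isostable if it is stable, its weak equivalences are invertible, and for every boundary with top $f:A\rightarrowtail B$, bottom $k:C\rightarrowtail D$ and vertical isomorphisms $g:A\twoheadrightarrow C$, $h:B\twoheadrightarrow D$, this boundary is a square iff the boundary with top $k$, left $g^{-1}$, right $h^{-1}$, bottom $f$ is a square. $S^{\square}_n\mathbb{C}$: objects are families $(A_{jk})_{0\le j\le k\le n}$ with $A_{jj}=O$, horizontal $A_{jk}\rightarrowtail A_{j,k+1}$, vertical $A_{jk}\twoheadrightarrow A_{j+1,k}$, each unit cell ($j<k<n$) a square; morphisms are families of vertical morphisms $A_{jk}\twoheadrightarrow A'_{jk}$ such that every cell formed with a horizontal generator is a square and every cell formed with a vertical generator commutes in $\mathcal{V}_{\mathbb{C}}$ (their components are vertical weak equivalences). $\mathcal{H}_n\mathbb{C}$ is the category whose objects are sequences $O\rightarrowtail A_1\rightarrowtail\cdots\rightarrowtail A_n$ of horizontal morphisms and whose morphisms are families of vertical weak equivalences $A_i\twoheadrightarrow A'_i$ (identity on $O$) such that each boundary $(A_i\rightarrowtail A_{i+1}, A_i\twoheadrightarrow A_i', A_{i+1}\twoheadrightarrow A'_{i+1}, A'_i\rightarrowtail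 A'_{i+1})$ is a square. *)

(* Defs.v *)
From mathcomp Require Import all_boot.
Set Implicit Arguments.
Unset Strict Implicit.
Unset Printing Implicit Defensive.

(* A flat double category: a horizontal category (Hm, idH, compH), a    *)
(* vertical category (Vm, idV, compV), and a predicate sq on boundaries *)
(* (top, left, right, bottom) closed under identity squares and         *)
(* horizontal / vertical pasting.  Composition is written in            *)
(* diagrammatic order: compH f g = "f then g".                         *)
Record SqCat := {
  Obj : Type;
  Hm : Obj -> Obj -> Type;
  idH : forall A, Hm A A;
  compH : forall A B C, Hm A B -> Hm B C -> Hm A C;
  compH_id_l : forall A B (f : Hm A B), compH (idH A) f = f;
  compH_id_r : forall A B (f : Hm A B), compH f (idH B) = f;
  compH_assoc : forall A B C D (f : Hm A B) (g : Hm B C) (h : Hm C D),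
      compH f (compH g h) = compH (compH f g) h;
  Vm : Obj -> Obj -> Type;
  idV : forall A, Vm A A;
  compV : forall A B C, Vm A B -> Vm B C -> Vm A C;
  compV_id_l : forall A B (f : Vm A B), compV (idV A) f = f;
  compV_id_r : forall A B (f : Vm A B), compV f (idV B) = f;
  compV_assoc : forall A B C D (f : Vm A B) (g : Vm B C) (h : Vm C D),
      compV f (compV g h) = compV (compV f g) h;
  sq : forall A B C D, Hm A B -> Vm A C -> Vm B D -> Hm C D -> Prop;
  sq_idH : forall A C (g : Vm A C), sq (idH A) g g (idH C);
  sq_idV : forall A B (f : Hm A B), sq f (idV A) (idV B) f;
  sq_compH : forall A B E C D F (f : Hm A B) (f' : Hm B E) (g : Vm A C)
      (h : Vm B D) (h' : Vm E F) (k : Hm C D) (k' : Hm D F),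
      sq f g h k -> sq f' h h' k' -> sq (compH f f') g h' (compH k k');
  sq_compV : forall A B C D C' D' (f : Hm A B) (g : Vm A C) (h : Vm B D)
      (k : Hm C D) (g' : Vm C C') (h' : Vm D D') (l : Hm C' D'),
      sq f g h k -> sq k g' h' l -> sq f (compV g g') (compV h h') l;
  O : Obj;
  zH : forall A, Hm O A;
  zH_uniq : forall A (f : Hm O A), f = zH A;
  tV : forall A, Vm A O;
  tV_uniq : forall A (f : Vm A O), f = tV A
}.

Arguments idH {s} A.
Arguments compH {s A B C} _ _.
Arguments idV {s} A.
Arguments compV {s A B C} _ _.
Arguments sq {s A B C D} _ _ _ _.
Arguments O {s}.
Arguments zH {s} A.
Arguments tV {s} A.

Section Defs.
Variable C : SqCat.

Definition vWE (A B : Obj C) (f : Vm A B) : Prop :=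
  sq (zH A) (idV O) f (zH B).
Definition hWE (A B : Obj C) (g : Hm A B) : Prop :=
  sq g (tV A) (tV B) (idH O).

(* Double functors out of the generating shapes span, boxdot, cospan. *)
Record Span := mkSpan {
  spA : Obj C; spB : Obj C; spC : Obj C;
  sptop : Hm spA spB; spleft : Vm spA spC }.

Record Box := mkBox {
  bxA : Obj C; bxB : Obj C; bxC : Obj C; bxD : Obj C;
  bxtop : Hm bxA bxB; bxleft : Vm bxA bxC;
  bxright : Vm bxB bxD; bxbot : Hm bxC bxD;
  bxsq : sq bxtop bxleft bxright bxbot }.

Record Cospan := mkCospan {
  coB : Obj C; coC : Obj C; coD : Obj C;
  coright : Vm coB coD; cobot : Hm coC coD }.

(* vertical natural transformations (morphisms of Fun^v), given by their
   components; conditions for the generating morphisms of each shape *)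
Definition spanT (X Y : Span) (ta : Vm (spA X) (spA Y))
    (tb : Vm (spB X) (spB Y)) (tc : Vm (spC X) (spC Y)) : Prop :=
  sq (sptop X) ta tb (sptop Y) /\ compV ta (spleft Y) = compV (spleft X) tc.

Definition boxT (F G : Box) (ta : Vm (bxA F) (bxA G))
    (tb : Vm (bxB F) (bxB G)) (tc : Vm (bxC F) (bxC G))
    (td : Vm (bxD F) (bxD G)) : Prop :=
  [/\ sq (bxtop F) ta tb (bxtop G), sq (bxbot F) tc td (bxbot G),
      compV ta (bxleft G) = compV (bxleft F) tc
    & compV tb (bxright G) = compV (bxright F) td].

Definition cospT (X Y : Cospan) (tb : Vm (coB X) (coB Y))
    (tc : Vm (coC X) (coC Y)) (td : Vm (coD X) (coD Y)) : Prop :=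
  sq (cobot X) tc td (cobot Y) /\ compV tb (coright Y) = compV (coright X) td.

Definition istar (F : Box) : Span := mkSpan (bxtop F) (bxleft F).
Definition jstar (F : Box) : Cospan := mkCospan (bxright F) (bxbot F).

Definition boxOfSpan (X : Span) (D : Obj C) (r : Vm (spB X) D)
    (b : Hm (spC X) D) (p : sq (sptop X) (spleft X) r b) : Box :=
  @mkBox (spA X) (spB X) (spC X) D (sptop X) (spleft X) r b p.

Definition boxOfCospan (Y : Cospan) (A : Obj C) (t : Hm A (coB Y))
    (l : Vm A (coC Y)) (p : sq t l (coright Y) (cobot Y)) : Box :=
  @mkBox A (coB Y) (coC Y) (coD Y) t l (coright Y) (cobot Y) p.

(* A section s of i^* (strictly, i^* s = id) is given by its
   value on objects (the missing corner d with its two morphisms and the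
   square) and on morphisms (the missing component at d), subject to
   naturality and functoriality; similarly for t. *)
Record Stable := {
  sD : Span -> Obj C;
  sR : forall X, Vm (spB X) (sD X);
  sB : forall X, Hm (spC X) (sD X);
  sSq : forall X, sq (sptop X) (spleft X) (sR X) (sB X);
  sM : forall X Y ta tb tc, @spanT X Y ta tb tc -> Vm (sD X) (sD Y);
  sM_nat : forall X Y ta tb tc (p : @spanT X Y ta tb tc),
      @boxT (boxOfSpan (sSq X)) (boxOfSpan (sSq Y)) ta tb tc (sM p);
  sM_id : forall X (p : spanT (idV _) (idV _) (idV _)),
      @sM X X _ _ _ p = idV (sD X);
  sM_comp : forall X Y Z ta tb tc ta' tb' tc'
      (p : @spanT X Y ta tb tc) (p' : @spanT Y Z ta' tb' tc')
      (p'' : spanT (compV ta ta') (compV tb tb') (compV tc tc')),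
      sM p'' = compV (sM p) (sM p');
  (* (ii) natural transformation w : s i^* => id, identity at a, b, c *)
  wD : forall F : Box, Vm (sD (istar F)) (bxD F);
  w_tr : forall F : Box,
      @boxT (boxOfSpan (sSq (istar F))) F (idV _) (idV _) (idV _) (wD F);
  w_nat : forall F G ta tb tc td (p : @boxT F G ta tb tc td)
      (q : @spanT (istar F) (istar G) ta tb tc),
      compV (sM q) (wD G) = compV (wD F) td;
  tA : Cospan -> Obj C;
  tT : forall Y, Hm (tA Y) (coB Y);
  tL : forall Y, Vm (tA Y) (coC Y);
  tSq : forall Y, sq (tT Y) (tL Y) (coright Y) (cobot Y);
  tM : forall X Y tb tc td, @cospT X Y tb tc td -> Vm (tA X) (tA Y);
  tM_nat : forall X Y tb tc td (p : @cospT X Y tb tc td),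
      @boxT (boxOfCospan (tSq X)) (boxOfCospan (tSq Y)) (tM p) tb tc td;
  tM_id : forall Y (p : cospT (idV _) (idV _) (idV _)),
      @tM Y Y _ _ _ p = idV (tA Y);
  tM_comp : forall X Y Z tb tc td tb' tc' td'
      (p : @cospT X Y tb tc td) (p' : @cospT Y Z tb' tc' td')
      (p'' : cospT (compV tb tb') (compV tc tc') (compV td td')),
      tM p'' = compV (tM p) (tM p');
  (* (iv) natural transformation u : t j^* => id, identity at b, c, d and
     a vertical weak equivalence at a *)
  uA : forall F : Box, Vm (tA (jstar F)) (bxA F);
  u_tr : forall F : Box,
      @boxT (boxOfCospan (tSq (jstar F))) F (uA F) (idV _) (idV _) (idV _);
  u_we : forall F : Box, vWE (uA F);
  u_nat : forall F G ta tb tc td (p : @boxT F G ta tb tc td)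
      (q : @cospT (jstar F) (jstar G) tb tc td),
      compV (tM q) (uA G) = compV (uA F) ta
}.

Record Isostable := {
  iso_stable : Stable;
  vWE_inv : forall A B (f : Vm A B), vWE f ->
      exists g : Vm B A, compV f g = idV A /\ compV g f = idV B;
  hWE_inv : forall A B (f : Hm A B), hWE f ->
      exists g : Hm B A, compH f g = idH A /\ compH g f = idH B;
  sq_flip : forall (A B Cc D : Obj C) (f : Hm A B) (k : Hm Cc D)
      (g : Vm A Cc) (g' : Vm Cc A) (h : Vm B D) (h' : Vm D B),
      compV g g' = idV A -> compV g' g = idV Cc ->
      compV h h' = idV B -> compV h' h = idV D ->
      (sq f g h k <-> sq k g' h' f)
}.

(* S^square_n C.  An object is a family A j k (meaningful for          *)
(* 0 <= j <= k <= n) with A j j = O, horizontal maps A j k >-> A j k+1  *)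
(* (j <= k < n), vertical maps A j k ->> A j+1 k (j < k <= n), and each *)
(* unit cell (j < k < n) a square.  Index side conditions are passed    *)
(* as (boolean) proofs.                                                 *)
Record Sobj (n : nat) := {
  SA : nat -> nat -> Obj C;
  Sdiag : forall j, SA j j = O;
  Sh : forall j k, j <= k -> k < n -> Hm (SA j k) (SA j k.+1);
  Sv : forall j k, j < k -> k <= n -> Vm (SA j k) (SA j.+1 k);
  Ssq : forall j k (c : j < k) (b : k < n) (a : j <= k) (d : k <= n)
      (e : j < k.+1),
      sq (Sh a b) (Sv c d) (Sv e b) (Sh c b)
}.

Definition isSmor n (X Y : Sobj n)
    (tau : forall j k, j <= k -> k <= n -> Vm (SA X j k) (SA Y j k)) : Prop :=
  [/\ (forall j k (a : j <= k) (b : k < n) (d : k <= n) (a' : j <= k.+1),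
         sq (Sh X a b) (tau j k a d) (tau j k.+1 a' b) (Sh Y a b)),
      (forall j k (c : j < k) (d : k <= n) (a : j <= k),
         compV (Sv X c d) (tau j.+1 k c d) = compV (tau j k a d) (Sv Y c d))
    & (forall j k (a : j <= k) (d : k <= n), vWE (tau j k a d))].

Record Hobj (n : nat) := {
  HA : nat -> Obj C;
  Hdiag : HA 0 = O;
  Hh : forall i, i < n -> Hm (HA i) (HA i.+1)
}.

Definition isHmor n (X Y : Hobj n)
    (phi : forall i, i <= n -> Vm (HA X i) (HA Y i)) : Prop :=
  (forall i (b : i < n) (d : i <= n), sq (Hh X b) (phi i d) (phi i.+1 b) (Hh Y b))
  /\ (forall i (p : 0 < i) (d : i <= n), vWE (phi i d)).

Definition Uobj n (X : Sobj n) : Hobj n :=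
  {| HA := fun i => SA X 0 i;
     Hdiag := Sdiag X 0;
     Hh := fun i (b : i < n) => Sh X (leq0n i) b |}.

Definition Umor n (X Y : Sobj n)
    (tau : forall j k, j <= k -> k <= n -> Vm (SA X j k) (SA Y j k)) :
    forall i, i <= n -> Vm (HA (Uobj X) i) (HA (Uobj Y) i) :=
  fun i d => tau 0 i (leq0n i) d.

Definition U_faithful n : Prop :=
  forall (X Y : Sobj n) tau tau', @isSmor n X Y tau -> @isSmor n X Y tau' ->
    (forall i d, @Umor n X Y tau i d = @Umor n X Y tau' i d) ->
    forall j k a d, tau j k a d = tau' j k a d.

Definition U_full n : Prop :=
  forall (X Y : Sobj n) phi, @isHmor n (Uobj X) (Uobj Y) phi ->
    exists tau, @isSmor n X Y tau /\ forall i d, @Umor n X Y tau i d = phi i d.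

Definition U_esssurj n : Prop :=
  forall Y : Hobj n, exists (X : Sobj n) phi psi,
    [/\ @isHmor n (Uobj X) Y phi, @isHmor n Y (Uobj X) psi,
        (forall i d, compV (phi i d) (psi i d) = idV _)
      & (forall i d, compV (psi i d) (phi i d) = idV _)].

Definition U_equivalence n : Prop :=
  [/\ U_faithful n, U_full n & U_esssurj n].

End Defs.

(* Main.v *)
Require Import Defs.
From mathcomp Require Import all_boot.
From Stdlib Require Import ClassicalEpsilon.
Set Implicit Arguments.
Unset Strict Implicit.
Unset Printing Implicit Defensive.

Section Gen.
Variable C : SqCat.
Variable HC : Isostable C.
Let S := iso_stable HC.

Lemma VmO_uniq (A B : Obj C) : B = O -> forall f g : Vm A B, f = g.
Proof. move=> -> f g. by rewrite (tV_uniq f) (tV_uniq g). Qed.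

Lemma vWE_O (A B : Obj C) : A = O -> B = O -> forall f : Vm A B, vWE f.
Proof. move=> -> -> f. rewrite /vWE (VmO_uniq erefl f (idV O)). exact: sq_idV. Qed.

Lemma vWE_idV (A : Obj C) : vWE (idV A).
Proof. exact: sq_idV. Qed.

Lemma vWE_sq (A B Cc D : Obj C) (f : Hm A B) (g : Vm A Cc) (h : Vm B D) (k : Hm Cc D) :
  sq f g h k -> vWE g -> vWE h.
Proof.
move=> s w. have := sq_compH w s.
by rewrite (zH_uniq (compH _ f)) (zH_uniq (compH _ k)).
Qed.

Lemma wD_vWE (F : Box C) : vWE (wD S F).
Proof. case: (w_tr S F) => _ s2 _ _. exact: (vWE_sq s2 (vWE_idV _)). Qed.

Definition vinv A B (f : Vm A B) (w : vWE f) : Vm B A :=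
  proj1_sig (constructive_indefinite_description _ (vWE_inv HC w)).

Lemma vinvK1 A B (f : Vm A B) (w : vWE f) : compV f (vinv w) = idV A.
Proof. rewrite /vinv. case: constructive_indefinite_description => g [] //. Qed.
Lemma vinvK2 A B (f : Vm A B) (w : vWE f) : compV (vinv w) f = idV B.
Proof. rewrite /vinv. case: constructive_indefinite_description => g [] //. Qed.

Lemma boxT_span (F G : Box C) ta tb tc td :
  @boxT C F G ta tb tc td -> @spanT C (istar F) (istar G) ta tb tc.
Proof. by case=> p1 _ p3 _; split. Qed.

Section Ext.
Variables (F G : Box C) (ta : Vm (bxA F) (bxA G)) (tb : Vm (bxB F) (bxB G))
  (tc : Vm (bxC F) (bxC G)).
Variable q : @spanT C (istar F) (istar G) ta tb tc.

Definition ext : Vm (bxD F) (bxD G) :=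
  compV (vinv (wD_vWE F)) (compV (sM S q) (wD S G)).

Lemma ext_sq : sq (bxbot F) tc ext (bxbot G).
Proof.
case: (w_tr S F) => _ sF _ _. case: (w_tr S G) => _ sG _ _.
case: (sM_nat S q) => _ sM' _ _.
have fl := proj1 (sq_flip HC _ _ (compV_id_l _) (compV_id_l _)
   (vinvK1 (wD_vWE F)) (vinvK2 (wD_vWE F))) sF.
have := sq_compV (sq_compV fl sM') sG.
by rewrite compV_id_l compV_id_r /ext compV_assoc.
Qed.

Lemma ext_nat : compV (bxright F) ext = compV tb (bxright G).
Proof.
case: (w_tr S F) => _ _ _ rF. case: (w_tr S G) => _ _ _ rG.
case: (sM_nat S q) => _ _ _ rM.
rewrite /= compV_id_l in rF. rewrite /= compV_id_l in rG. rewrite /= in rM.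
rewrite rF rG /ext !compV_assoc.
rewrite -(compV_assoc (sR S (istar F))) vinvK1 compV_id_r rM //.
Qed.

Lemma ext_we : vWE tc -> vWE ext.
Proof. exact: vWE_sq ext_sq. Qed.

Lemma ext_uniq td : @boxT C F G ta tb tc td -> td = ext.
Proof.
move=> p. have := w_nat S p q. rewrite /ext => ->.
by rewrite compV_assoc vinvK2 compV_id_l.
Qed.
End Ext.

Lemma boxT_uniq (F G : Box C) ta tb tc td td' :
  @boxT C F G ta tb tc td -> @boxT C F G ta tb tc td' -> td = td'.
Proof.
move=> p p'. by rewrite (ext_uniq (boxT_span p) p) (ext_uniq (boxT_span p) p').
Qed.

End Gen.

Section Mor.
Variable C : SqCat.
Variable HC : Isostable C.
Let S := iso_stable HC.
Variable n : nat.

Definition cellBox (Z : Sobj C n) j k (c : j < k) (b : k < n) (a : j <= k)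
  (d : k <= n) (e : j < k.+1) : Box C := mkBox (Ssq Z c b a d e).

Lemma cell_boxT (X Y : Sobj C n) tau (Ht : @isSmor C n X Y tau) j k
  (c : j < k) (b : k < n) (a : j <= k) (d : k <= n) (e : j < k.+1) (a' : j <= k.+1) :
  @boxT C (cellBox X c b a d e) (cellBox Y c b a d e) (tau j k a d) (tau j k.+1 a' b)
     (tau j.+1 k c d) (tau j.+1 k.+1 e b).
Proof.
case: Ht => H1 H2 _. split => /=.
- exact: H1.
- exact: (H1 j.+1 k c b d e).
- exact: esym (H2 j k c d a).
- exact: esym (H2 j k.+1 e b a').
Qed.

Lemma faithful_gen (X Y : Sobj C n) tau tau' :
  @isSmor C n X Y tau -> @isSmor C n X Y tau' ->
  (forall i d, tau 0 i (leq0n i) d = tau' 0 i (leq0n i) d) ->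
  forall j k a d, tau j k a d = tau' j k a d.
Proof.
move=> Ht Ht' H0. elim=> [|j IH] k a d.
  by rewrite (bool_irrelevance a (leq0n k)) H0.
have E := subnK a. move: a d. rewrite -E. move: (k - j.+1) => i {E k}.
elim: i => [|i IHi] a d.
  apply: VmO_uniq. exact: (Sdiag Y j.+1).
have c : j < i + j.+1 := leq_addl i j.+1.
have a0 : j <= i + j.+1 := ltnW c.
have d0 : i + j.+1 <= n := ltnW d.
have e : j < (i + j.+1).+1 := a0.
have p := cell_boxT Ht c d a0 d0 e (leqW a0).
have p' := cell_boxT Ht' c d a0 d0 e (leqW a0).
rewrite -!IH -IHi in p'.
rewrite (bool_irrelevance a e). exact: boxT_uniq p p'.
Qed.

Unset Implicit Arguments.
Section Full.
Variables (X Y : Sobj C n).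

Definition RowM j := forall k, j <= k -> k <= n -> Vm (SA X j k) (SA Y j k).
Definition rowsq j (r : RowM j) := forall k (a : j <= k) (b : k < n) (d : k <= n)
  (a' : j <= k.+1), sq (Sh X a b) (r k a d) (r k.+1 a' b) (Sh Y a b).
Definition rowwe j (r : RowM j) := forall k a d, vWE (r k a d).
Definition compat j (r : RowM j) (r' : RowM j.+1) :=
  forall k (c : j < k) (d : k <= n) (a : j <= k),
    compV (Sv X c d) (r' k c d) = compV (r k a d) (Sv Y c d).

Definition vO (A B : Obj C) (E : B = O) : Vm A B :=
  eq_rect_r (fun Z => Vm A Z) (tV A) E.

Section Step.
Variables (j : nat) (r : RowM j) (Hsq : @rowsq j r).

Definition good k (t : Vm (SA X j.+1 k) (SA Y j.+1 k)) :=
  vWE t /\ forall (c : j < k) (d : k <= n) (a : j <= k),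
    compV (Sv X c d) t = compV (r k a d) (Sv Y c d).

Lemma good0 : good (j.+1) (vO (SA X j.+1 j.+1) _ (Sdiag Y j.+1)).
Proof.
split; first exact: vWE_O (Sdiag X j.+1) (Sdiag Y j.+1) _.
move=> c d a. exact: VmO_uniq (Sdiag Y j.+1) _ _.
Qed.

Definition cpf i : j < i + j.+1 := leq_addl i j.+1.

Definition qcell i (h : i + j.+1 < n) t (g : good (i + j.+1) t) :
  @spanT C (istar (cellBox X (cpf i) h (ltnW (cpf i)) (ltnW h) (ltnW (cpf i))))
           (istar (cellBox Y (cpf i) h (ltnW (cpf i)) (ltnW h) (ltnW (cpf i))))
     (r (i + j.+1) (ltnW (cpf i)) (ltnW h)) (r (i + j.+1).+1 (leqW (ltnW (cpf i))) h) t :=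
  conj (Hsq (i + j.+1) (ltnW (cpf i)) h (ltnW h) (leqW (ltnW (cpf i))))
       (esym (proj2 g (cpf i) (ltnW h) (ltnW (cpf i)))).

Lemma goodS i (h : i + j.+1 < n) t (g : good (i + j.+1) t) :
  good (i.+1 + j.+1) (ext HC (qcell i h t g)).
Proof.
split; first exact (ext_we HC (qcell i h t g) (proj1 g)).
move=> c d a. have := ext_nat HC (qcell i h t g). rewrite /=.
rewrite (bool_irrelevance c (ltnW (cpf i))) (bool_irrelevance d h).
by rewrite (bool_irrelevance a (leqW (ltnW (cpf i)))).
Qed.

Fixpoint nr (i : nat) : i + j.+1 <= n ->
   {t : Vm (SA X j.+1 (i + j.+1)) (SA Y j.+1 (i + j.+1)) | good (i + j.+1) t} :=
  match i with
  | 0 => fun h => exist _ _ good0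
  | i'.+1 => fun h => exist _ _ (goodS i' h _ (proj2_sig (nr i' (ltnW h))))
  end.

Definition newrow : RowM j.+1 := fun k h1 h2 =>
  eq_rect _ (fun k => Vm (SA X j.+1 k) (SA Y j.+1 k))
    (proj1_sig (nr (k - j.+1) (eq_ind_r (fun x => x <= n) h2 (subnK h1)))) k (subnK h1).

Lemma cast_nr i' i (E : i' + j.+1 = i + j.+1) H h :
  eq_rect _ (fun k => Vm (SA X j.+1 k) (SA Y j.+1 k)) (proj1_sig (nr i' H)) _ E
  = proj1_sig (nr i h).
Proof.
have ei : i' = i := addIn E. subst i'.
by rewrite (eq_irrelevance E erefl) (bool_irrelevance H h).
Qed.

Lemma newrow_val i h1 h2 (h : i + j.+1 <= n) :
  newrow (i + j.+1) h1 h2 = proj1_sig (nr i h).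
Proof. rewrite /newrow. apply: cast_nr. Qed.

Lemma newrow_sq : rowsq j.+1 newrow.
Proof.
move=> k a b d a'. have E := subnK a. move: a b d a'. rewrite -E.
move: (k - j.+1) => i {E k} a b d a'.
rewrite (newrow_val i a d d) (newrow_val i.+1 a' b b) /=.
rewrite (bool_irrelevance d (ltnW b)).
have := ext_sq HC (qcell i b _ (proj2_sig (nr i (ltnW b)))). rewrite /=.
by rewrite (bool_irrelevance a (cpf i)).
Qed.

Lemma newrow_we : rowwe j.+1 newrow.
Proof.
move=> k a d. have E := subnK a. move: a d. rewrite -E.
move: (k - j.+1) => i {E k} a d.
rewrite (newrow_val i a d d). exact: (proj1 (proj2_sig (nr i d))).
Qed.

Lemma newrow_compat : compat j r newrow.
Proof.
move=> k c d a. have E := subnK c. move: c d a. rewrite -E.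
move: (k - j.+1) => i {E k} c d a.
rewrite (newrow_val i c d d). exact: (proj2 (proj2_sig (nr i d)) c d a).
Qed.
End Step.

Variables (phi : forall i, i <= n -> Vm (HA (Uobj X) i) (HA (Uobj Y) i))
  (Hphi : isHmor phi).

Definition r0 : RowM 0 := fun k _ d => phi k d.

Lemma r0sq : rowsq 0 r0.
Proof.
move=> k a b d a'. have := proj1 Hphi k b d. rewrite /=.
by rewrite (bool_irrelevance a (leq0n k)).
Qed.

Lemma r0we : rowwe 0 r0.
Proof.
move=> [|k] a d.
  exact: vWE_O (Sdiag X 0) (Sdiag Y 0) _.
exact: (proj2 Hphi k.+1 (ltn0Sn k) d).
Qed.

Fixpoint rowsM j : {r : RowM j | rowsq j r /\ rowwe j r} :=
  match j with
  | 0 => exist _ r0 (conj r0sq r0we)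
  | j'.+1 => exist _ (newrow j' (proj1_sig (rowsM j')) (proj1 (proj2_sig (rowsM j'))))
      (conj (newrow_sq _ _ _) (newrow_we _ _ _))
  end.

Definition tauF j k a d := proj1_sig (rowsM j) k a d.

Lemma full_main : isSmor tauF /\ forall i d, @Umor C n X Y tauF i d = phi i d.
Proof.
split=> //. split.
- move=> j k a b d a'. exact: (proj1 (proj2_sig (rowsM j)) k a b d a').
- move=> j k c d a. exact: (newrow_compat j _ _ k c d a).
- move=> j k a d. exact: (proj2 (proj2_sig (rowsM j)) k a d).
Qed.
End Full.
End Mor.

Set Implicit Arguments.
Section Ess.
Variable C : SqCat.
Variable HC : Isostable C.
Let S := iso_stable HC.
Variable n : nat.
Variable Y : Hobj C n.

Definition castHY (m m' p p' : nat) (E1 : m = p) (E2 : m' = p')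
  (f : Hm (HA Y p) (HA Y p')) : Hm (HA Y m) (HA Y m') :=
  eq_rect p (fun x => Hm (HA Y x) (HA Y m'))
    (eq_rect p' (fun y => Hm (HA Y p) (HA Y y)) f m' (esym E2)) m (esym E1).

Definition castY (m m' : nat) (E : m = m') : Vm (HA Y m) (HA Y m') :=
  eq_rect m (fun x => Vm (HA Y m) (HA Y x)) (idV _) m' E.

Lemma minE1 i : (i < n) = true -> minn i n = i.
Proof. move=> e. apply/minn_idPl. exact: ltnW. Qed.
Lemma minE2 i : (i < n) = true -> minn i.+1 n = i.+1.
Proof. move=> e. by apply/minn_idPl. Qed.
Lemma minE3 i : (i < n) = false -> minn i n = n.
Proof. move=> e. apply/minn_idPr. by rewrite leqNgt e. Qed.
Lemma minE4 i : (i < n) = false -> minn i.+1 n = n.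
Proof. move=> e. apply/minn_idPr. rewrite leqW // leqNgt e //. Qed.

Definition h0' i (bb : bool) (e : (i < n) = bb) : Hm (HA Y (minn i n)) (HA Y (minn i.+1 n)) :=
  match bb as b return ((i < n) = b -> Hm (HA Y (minn i n)) (HA Y (minn i.+1 n))) with
  | true => fun e => castHY (minE1 e) (minE2 e) (Hh Y e)
  | false => fun e => castHY (minE3 e) (minE4 e) (idH (HA Y n))
  end e.

Definition h0 i := @h0' i (i < n) erefl.

Lemma h0'_lt i bb (e : (i < n) = bb) (b : i < n) :
  exists E1 E2, h0' e = castHY E1 E2 (Hh Y b).
Proof.
revert e; case: bb => e /=.
  exists (minE1 e), (minE2 e). by rewrite (bool_irrelevance e b).
exfalso. by rewrite b in e.
Qed.

Lemma h0_lt i (b : i < n) : exists E1 E2, h0 i = castHY E1 E2 (Hh Y b).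
Proof. exact: h0'_lt. Qed.

Definition Row := {A : nat -> Obj C & forall i, Hm (A i) (A i.+1)}.

Fixpoint nx (A : nat -> Obj C) (h : forall i, Hm (A i) (A i.+1)) (i : nat) :
  {Z : Obj C & Vm (A i.+1) Z} :=
  match i with
  | 0 => existT _ O (tV (A 1))
  | i'.+1 => existT _ (sD S (mkSpan (h i'.+1) (projT2 (nx h i'))))
                      (sR S (mkSpan (h i'.+1) (projT2 (nx h i'))))
  end.

Definition Next (R : Row) : Row :=
  existT _ (fun i => projT1 (nx (projT2 R) i))
    (fun i => sB S (mkSpan (projT2 R i.+1) (projT2 (nx (projT2 R) i)))).

Definition R0 : Row := existT _ (fun i => HA Y (minn i n)) h0.

Fixpoint rows j : Row := match j with 0 => R0 | j'.+1 => Next (rows j') end.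

Definition RA j := projT1 (rows j).
Definition Rh j : forall i, Hm (RA j i) (RA j i.+1) := projT2 (rows j).
Definition vv j i : Vm (RA j i.+1) (RA j.+1 i) := projT2 (nx (Rh j) i).

Definition SAx j k := RA j (k - j).

Lemma Sdiagx j : SAx j j = O.
Proof. rewrite /SAx subnn. case: j => [|j] //=. by rewrite /RA /= min0n (Hdiag Y). Qed.

Unset Implicit Arguments.
Definition castRowH j (m m' : nat) (E : m' = m.+1) : Hm (RA j m) (RA j m') :=
  eq_rect_r (fun x => Hm (RA j m) (RA j x)) (Rh j m) E.
Definition castRowV j (m m' : nat) (E : m = m'.+1) : Vm (RA j m) (RA j.+1 m') :=
  eq_rect_r (fun x => Vm (RA j x) (RA j.+1 m')) (vv j m') E.

Definition Shx j k (a : j <= k) (b : k < n) : Hm (SAx j k) (SAx j k.+1) :=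
  castRowH j (k - j) (k.+1 - j) (subSn a).
Definition Svx j k (c : j < k) (d : k <= n) : Vm (SAx j k) (SAx j.+1 k) :=
  castRowV j (k - j) (k - j.+1) (esym (subnSK c)).

Lemma sq_castgen j m1 m2 m3 m4 (E1 : m2 = m1.+1) (E2 : m1 = m3.+1)
  (E3 : m2 = m4.+1) (E4 : m4 = m3.+1) :
  sq (castRowH j m1 m2 E1) (castRowV j m1 m3 E2) (castRowV j m2 m4 E3)
     (castRowH j.+1 m3 m4 E4).
Proof.
subst m2. subst m1. subst m4. rewrite (eq_irrelevance E3 erefl).
exact (sSq S (mkSpan (Rh j m3.+1) (vv j m3))).
Qed.

Lemma Ssqx j k (c : j < k) (b : k < n) (a : j <= k) (d : k <= n) (e : j < k.+1) :
  sq (Shx j k a b) (Svx j k c d) (Svx j k.+1 e b) (Shx j.+1 k c b).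
Proof. apply: sq_castgen. Qed.

Definition Xs : Sobj C n :=
  {| SA := SAx; Sdiag := Sdiagx; Sh := Shx; Sv := Svx; Ssq := Ssqx |}.

Lemma phiE i : i <= n -> minn (i - 0) n = i.
Proof. move=> d. rewrite subn0. exact/minn_idPl. Qed.

Definition phis i (d : i <= n) : Vm (HA (Uobj Xs) i) (HA Y i) :=
  castY (phiE i d).
Definition psis i (d : i <= n) : Vm (HA Y i) (HA (Uobj Xs) i) :=
  castY (esym (phiE i d)).

Lemma castY_we m m' (E : m = m') : vWE (castY E).
Proof. subst m'. exact: vWE_idV. Qed.

Lemma castY_inv1 m m' (E : m = m') : compV (castY E) (castY (esym E)) = idV _.
Proof. subst m'. exact: compV_id_l. Qed.
Lemma castY_inv2 m m' (E : m = m') : compV (castY (esym E)) (castY E) = idV _.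
Proof. subst m'. exact: compV_id_l. Qed.

Lemma castHY_sq (m m' p p' : nat) (E1 : m = p) (E2 : m' = p') f :
  sq (castHY E1 E2 f) (castY E1) (castY E2) f.
Proof. subst p p'. exact: sq_idV. Qed.

Lemma phis_sq_gen i (b : i < n) m m' (E0 : m' = m.+1) (Em : minn m n = i)
  (Em' : minn m' n = i.+1) (Emi : m = i) :
  sq (castRowH 0 m m' E0) (castY Em) (castY Em') (Hh Y b).
Proof.
subst m'. subst m. change (sq (h0 i) (castY Em) (castY Em') (Hh Y b)).
have [E1 [E2 ->]] := h0_lt b.
rewrite (eq_irrelevance Em E1) (eq_irrelevance Em' E2). exact: castHY_sq.
Qed.

Lemma phis_hmor : isHmor phis.
Proof.
split.
  move=> i b d. apply: phis_sq_gen. exact: subn0.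
move=> i _ d. exact: castY_we.
Qed.

Lemma psis_hmor : isHmor psis.
Proof.
split.
  move=> i b d.
  apply (proj1 (sq_flip HC (Hh (Uobj Xs) b) (Hh Y b) (castY_inv1 _ _ (phiE i d)) (castY_inv2 _ _ (phiE i d))
     (castY_inv1 _ _ (phiE i.+1 b)) (castY_inv2 _ _ (phiE i.+1 b)))).
  exact (proj1 phis_hmor i b d).
move=> i _ d. exact: castY_we.
Qed.

Lemma esssurj_main : exists (X : Sobj C n) phi psi,
    [/\ @isHmor C n (Uobj X) Y phi, @isHmor C n Y (Uobj X) psi,
        (forall i d, compV (phi i d) (psi i d) = idV _)
      & (forall i d, compV (psi i d) (phi i d) = idV _)].
Proof.
exists Xs, phis, psis. split.
- exact: phis_hmor.
- exact: psis_hmor.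
- move=> i d. exact: castY_inv1.
- move=> i d. exact: castY_inv2.
Qed.
End Ess.

Theorem lemma3p25 (C : SqCat) (HC : Isostable C) (n : nat) :
  U_equivalence C n.
Proof.
split.
- move=> X Y tau tau' Ht Ht' H j k a d. exact: (faithful_gen HC Ht Ht' H).
- move=> X Y phi Hphi. exists (tauF C HC n X Y phi Hphi).
  exact: full_main.
- move=> Y. exact: esssurj_main HC n Y.
Qed.
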